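(* Let $N\ge1$, $W,N_0,P_A,P^{max}>0$ and for $i=1,\dots,N$ let $D_i,\zeta_i,h_i,g_i>0$. Consider the problem: minimize $\tau_0+\sum_{i=1}^N\tau_{S_i}$ over $\tau_0,\tau_{S_i},P_{S_i}\ge0$ subject to, for all $i$, $P_{S_i}\tau_{S_i}\le\zeta_iP_Ah_i\tau_0$, $\tau_{S_i}W\log_2\left(1+\frac{P_{S_i}g_i}{WN_0}\right)\ge D_i$, and $P_{S_i}\le P^{max}$. For each $i$ let $\gamma_i=\frac{g_i\zeta_iP_Ah_i}{WN_0}$, $\alpha_i=\mathbb{L}_0\!\left(\frac{\gamma_i-1}{e}\right)+1$ ($\mathbb{L}_0$ the principal Lambert W function), $\dot\tau_{S_i}=\frac{D_i\ln2}{W\alpha_i}$, $\dot\tau_0^i=\frac{D_i\ln2}{W\alpha_i\gamma_i}\left(2^{\alpha_i/\ln2}-1\right)$, $\ddot\tau_{S_i}=\frac{D_i}{W\log_2(1+P^{max}g_i/(WN_0))}$, $\ddot\tau_0^i=\frac{P^{max}\ddot\tau_{S_i}}{\zeta_iP_Ah_i}$, and set $\hat\tau_0^i=\dot\tau_0^i$ if $\zeta_iP_Ah_i\dot\tau_0^i/\dot\tau_{S_i}\le P^{max}$ and $\hat\tau_0^i=\ddot\tau_0^i$ otherwise. Then $\max_{i=1,\dots,N}\hat\tau_0^i$ is a lower bound on the optimal value of $\tau_0$ in this problem.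
   Context: Multiple source wireless powered network: all sources harvest energy from an AP of power $P_A$ during a common time $\tau_0$ (source $i$ harvests $\zeta_iP_Ah_i\tau_0$), then each source $i$ transmits $D_i$ bits in its own slot of length $\tau_{S_i}$ with power $P_{S_i}$ over an AWGN channel of gain $g_i$. $\hat\tau_0^i$ is the optimal energy harvesting time when source $i$ is alone in the network. *)

(* Defs.v *)
From HB Require Import structures.
From mathcomp Require Import all_boot all_order all_algebra.
From mathcomp Require Import all_classical all_reals all_analysis.
Set Implicit Arguments. Unset Strict Implicit. Unset Printing Implicit Defensive.
Import Order.TTheory GRing.Theory Num.Theory.
Local Open Scope ring_scope.
Local Open Scope classical_set_scope.

(* Principal branch L_0 of the Lambert W function: for x >= -1/e, the unique
   w >= -1 with w * e^w = x (chosen via xget; outside the domain the value is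
   an arbitrary default 0, never used here). *)
Definition lambertW0 {R : realType} (x : R) : R :=
  xget 0 [set w : R | -1 <= w /\ w * expR w = x].

Definition log2 {R : realType} (x : R) : R := ln x / ln 2.

Definition feasible {R : realType} (N : nat) (W N0 PA Pmax : R)
  (D zeta h g : 'I_N -> R) (tau0 : R) (tauS PS : 'I_N -> R) : Prop :=
  0 <= tau0 /\
  forall i, 0 <= tauS i /\ 0 <= PS i /\
    PS i * tauS i <= zeta i * PA * h i * tau0 /\
    D i <= tauS i * W * log2 (1 + PS i * g i / (W * N0)) /\
    PS i <= Pmax.

Definition objective {R : realType} (N : nat) (tau0 : R) (tauS : 'I_N -> R) : R :=
  tau0 + \sum_(i < N) tauS i.

Definition optimal {R : realType} (N : nat) (W N0 PA Pmax : R)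
  (D zeta h g : 'I_N -> R) (tau0 : R) (tauS PS : 'I_N -> R) : Prop :=
  feasible W N0 PA Pmax D zeta h g tau0 tauS PS /\
  forall t0 tS P, feasible W N0 PA Pmax D zeta h g t0 tS P ->
    objective tau0 tauS <= objective t0 tS.

Section Quantities.
Variables (R : realType) (W N0 PA Pmax Di zetai hi gi : R).
Definition gamma_i : R := gi * zetai * PA * hi / (W * N0).
Definition alpha_i : R := lambertW0 ((gamma_i - 1) / expR 1) + 1.
Definition tauS_dot : R := Di * ln 2 / (W * alpha_i).
Definition tau0_dot : R :=
  Di * ln 2 / (W * alpha_i * gamma_i) * (2 `^ (alpha_i / ln 2) - 1).
Definition tauS_ddot : R := Di / (W * log2 (1 + Pmax * gi / (W * N0))).
Definition tau0_ddot : R := Pmax * tauS_ddot / (zetai * PA * hi).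
Definition tau0_hat : R :=
  if zetai * PA * hi * tau0_dot / tauS_dot <= Pmax then tau0_dot else tau0_ddot.
End Quantities.

(* Main.v *)
Require Import Defs.
From HB Require Import structures.
From mathcomp Require Import all_boot all_order all_algebra.
From mathcomp Require Import all_classical all_reals all_analysis.
From mathcomp Require Import ring lra.
Import Order.TTheory GRing.Theory Num.Theory.
Import numFieldNormedType.Exports.
Local Open Scope ring_scope.
Set Implicit Arguments. Unset Strict Implicit.

Lemma slope_expR (R : realType) (u0 u : R) : 0 < u0 -> u0 <= u ->
  u * (expR u0 - 1) <= u0 * (expR u - 1).
Proof.
move=> u00 u0u; have u0' : 0 < u by apply: lt_le_trans u0u.
have h0 : 0 <= u0 / u by rewrite divr_ge0 // ltW.
have h1 : u0 / u <= 1 by rewrite ler_pdivrMr // mul1r.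
have := convex_expR (Itv01 h0 h1) u 0.
rewrite !convRE /= /unstable.onem mulr0 addr0 expR0 mulr1 divfK ?gt_eqF //.
move=> H.
have E : u0 = (u0 / u) * u by rewrite divfK ?gt_eqF.
move: H; set t := u0 / u => H.
rewrite [in X in _ <= X]E.
have := ler_wpM2l (ltW u0') H.
move=> H2.
have -> : t * u * (expR u - 1) = u * (t * expR u + (1 - t)) - u by ring.
rewrite mulrBr mulr1 lerD2r //.
Qed.

Lemma ln_lt_sub1 (R : realType) (r : R) : 0 < r -> r != 1 -> ln r < r - 1.
Proof.
move=> r0 r1.
have lr : ln r != 0.
  apply/negP => /eqP E; move/negP: r1; apply; apply/eqP.
  by rewrite -[r]lnK ?posrE // E expR0.
have := expR_gt1Dx lr; rewrite lnK ?posrE // => H.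
by rewrite ltrBrDl.
Qed.

Lemma ln_div' (R : realType) (x y : R) : 0 < x -> 0 < y -> ln (x / y) = ln x - ln y.
Proof. by move=> x0 y0; rewrite ln_div ?posrE. Qed.

Lemma mono_zln (R : realType) (z0 z : R) : 1 < z0 -> z0 <= z ->
  (z0 - 1) * ln z <= (z - 1) * ln z0.
Proof.
move=> z01 z0z.
have z1 : 1 < z by apply: lt_le_trans z0z.
have l : ln z0 <= ln z by rewrite ler_ln ?posrE //; lra.
have := slope_expR (ln_gt0 z01) l.
rewrite !lnK ?posrE //; try lra.
Qed.

Lemma key_ineq (R : realType) (a z1 z2 : R) : 1 < z1 -> z1 < z2 ->
  z2 * ln z2 - z2 <= a -> (a + z2) * ln z1 < (a + z1) * ln z2.
Proof.
move=> z11 z12 ha.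
have v0 := ln_gt0 z11.
have vu : ln z1 < ln z2 by rewrite ltr_ln ?posrE //; lra.
have p1 : 0 < z1 / z2 by apply: divr_gt0; lra.
have n1 : z1 / z2 != 1.
  apply/negP => /eqP E.
  have : z1 = z2 by rewrite -[z1](@divfK _ z2) ?E ?mul1r //; apply/negP => /eqP E2; lra.
  lra.
have hr := ln_lt_sub1 p1 n1.
rewrite ln_div' in hr; try lra.
have hr2 : z2 * (ln z1 - ln z2) < z1 - z2.
  have -> : z1 - z2 = z2 * (z1 / z2 - 1).
    by rewrite mulrBr mulr1 mulrC divfK //; apply/negP => /eqP E2; lra.
  by rewrite ltr_pM2l //; lra.
set u := ln z2 in vu hr2 ha *; set v := ln z1 in v0 vu hr2 *.
have h1 : (z2 * u - z2) * (u - v) <= a * (u - v) by apply: ler_wpM2r; lra.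
have h2 : 0 < u * (z2 * (u - v) - z2 + z1) by apply: mulr_gt0; lra.
have E : (a + z1) * u - (a + z2) * v = a * (u - v) - (z2 * u - z2) * (u - v)
   + u * (z2 * (u - v) - z2 + z1) by ring.
rewrite -subr_gt0 E; lra.
Qed.

Lemma zlnz_mono (R : realType) (z y : R) : 1 <= z -> z <= y ->
  z * ln z - z <= y * ln y - y.
Proof.
move=> z1 zy.
have l0 := ln_ge0 z1.
have p : 0 < z / y by apply: divr_gt0; lra.
have h : ln (z / y) <= z / y - 1.
  have [E|ne] := eqVneq (z / y) 1; first by rewrite E ln1; lra.
  exact/ltW/ln_lt_sub1.
rewrite ln_div' in h; try lra.
have h2 : y * (ln z - ln y) <= z - y.
  have -> : z - y = y * (z / y - 1).
    by rewrite mulrBr mulr1 mulrC divfK //; apply/negP => /eqP E2; lra.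
  by rewrite ler_pM2l //; lra.
have h3 : 0 <= (y - z) * ln z by apply: mulr_ge0; lra.
have E : y * ln y - y - (z * ln z - z) = (z - y) - y * (ln z - ln y) + (y - z) * ln z by ring.
rewrite -subr_ge0 E; lra.
Qed.

Lemma lambert_spec (R : realType) (x : R) : - expR (-1) < x ->
  -1 < lambertW0 x /\ lambertW0 x * expR (lambertW0 x) = x.
Proof.
move=> hx.
have ex : exists w : R, -1 <= w /\ w * expR w = x.
  have hx0 := normr_ge0 x.
  have le1 : -1 <= `|x| by lra.
  have cont : continuous (fun w : R => w * expR w).
    move=> w; apply: continuousM; [exact: cvg_id | exact: continuous_expR].
  have bnd : Num.min ((fun w : R => w * expR w) (-1)) ((fun w : R => w * expR w) `|x|) <= x <=
             Num.max ((fun w : R => w * expR w) (-1)) ((fun w : R => w * expR w) `|x|).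
    rewrite ge_min le_max /= mulN1r; apply/andP; split.
      by rewrite ltW.
    apply/orP; right.
    have h2 := real_ler_norm (num_real x).
    have h1 := expR_ge1Dx `|x|.
    apply: (le_trans h2). rewrite -[X in X <= _]mulr1.
    by apply: ler_wpM2l => //; lra.
  have [c] := IVT le1 (continuous_subspaceT cont) bnd.
  rewrite in_itv /= => /andP[c1 _] fc.
  by exists c.
have [h1 h2] := xgetPex 0 ex.
rewrite /lambertW0; split => //.
rewrite lt_neqAle h1 andbT; apply/negP => /eqP E.
by move: h2; rewrite -E mulN1r => E2; move: hx; rewrite E2 ltxx.
Qed.

Lemma single (R : realType) (c K g D W P0 t s p : R) :
  0 < c -> 0 < K -> 0 < g -> 0 < D -> 0 < W -> 0 < P0 ->
  (1 + P0 * g / K) * ln (1 + P0 * g / K) - (1 + P0 * g / K) <= g * c / K - 1 ->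
  0 <= t -> 0 <= s -> 0 <= p -> p * s <= c * t ->
  D <= s * W * log2 (1 + p * g / K) ->
  t < P0 * (D / (W * log2 (1 + P0 * g / K))) / c ->
  P0 * (D / (W * log2 (1 + P0 * g / K))) / c + D / (W * log2 (1 + P0 * g / K))
   < t + s.
Proof.
move=> c0 K0 g0 D0 W0 P00 ha t0 s0 p0 hps hD ht.
have l2 : 0 < ln (2 : R) by apply: ln_gt0; lra.
have Q0 : 0 < P0 * g / K by apply: divr_gt0 => //; apply: mulr_gt0.
set z0 := 1 + P0 * g / K in ha ht *.
have z01 : 1 < z0 by rewrite /z0; lra.
have L00 : 0 < ln z0 by apply: ln_gt0.
have pp : 0 < p.
  rewrite lt_neqAle p0 andbT; apply/negP => /eqP E.
  by move: hD; rewrite -E mul0r mul0r addr0 /log2 ln1 mul0r mulr0; lra.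
have q0 : 0 < p * g / K by apply: divr_gt0 => //; apply: mulr_gt0.
set z := 1 + p * g / K in hD *.
have z1 : 1 < z by rewrite /z; lra.
have L0 : 0 < ln z by apply: ln_gt0.
have hs : D * ln 2 <= s * W * ln z.
  by move: hD; rewrite /log2 mulrA ler_pdivlMr.
have Es0 : D / (W * log2 z0) = D * ln 2 / (W * ln z0).
  by rewrite /log2; field; rewrite !gt_eqF.
rewrite Es0 in ht *.
set s00 := D * ln 2 / (W * ln z0) in ht *.
have sp : 0 < s.
  rewrite lt_neqAle s0 andbT; apply/negP => /eqP E.
  move: hs; rewrite -E !mul0r => H.
  have : 0 < D * ln 2 by apply: mulr_gt0.
  lra.
have hts : p * s / c <= t by rewrite ler_pdivrMr // [t * c]mulrC.
have [zz|zz] := leP z0 z.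
- exfalso.
  have hm := mono_zln z01 zz.
  have hm2 : P0 * ln z <= p * ln z0.
    have gK : 0 < g / K by apply: divr_gt0.
    have e1 : z0 - 1 = P0 * (g / K) by rewrite /z0; ring.
    have e2 : z - 1 = p * (g / K) by rewrite /z; ring.
    by move: hm; rewrite e1 e2 mulrAC [X in _ <= X -> _]mulrAC ler_pM2r.
  have WL : 0 < W * ln z0 by apply: mulr_gt0.
  have c1 : P0 * (D * ln 2) <= P0 * (s * W * ln z) by apply: ler_wpM2l => //; apply: ltW.
  have c2 : P0 * (s * W * ln z) <= s * W * (p * ln z0).
    have -> : P0 * (s * W * ln z) = s * W * (P0 * ln z) by ring.
    by apply: ler_wpM2l => //; apply: mulr_ge0 => //; apply: ltW.
  have c3 : s * W * (p * ln z0) <= c * t * (W * ln z0).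
    have -> : s * W * (p * ln z0) = p * s * (W * ln z0) by ring.
    by apply: ler_wpM2r => //; apply: ltW.
  have : P0 * s00 / c <= t.
    rewrite /s00 ler_pdivrMr // mulrA ler_pdivrMr //.
    have -> : t * c * (W * ln z0) = c * t * (W * ln z0) by ring.
    exact: le_trans c1 (le_trans c2 c3).
  lra.
- have hk := key_ineq z1 zz ha.
  have gK : 0 < g / K by apply: divr_gt0.
  have hk2 : (c + P0) * ln z < (c + p) * ln z0.
    have e1 : g * c / K - 1 + z0 = g / K * (c + P0) by rewrite /z0; ring.
    have e2 : g * c / K - 1 + z = g / K * (c + p) by rewrite /z; ring.
    by move: hk; rewrite e1 e2 -!(mulrA (g / K)) ltr_pM2l.
  have WL : 0 < W * ln z0 by apply: mulr_gt0.
  have cP : 0 < c + P0 by apply: addr_gt0.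
  have c1 : D * ln 2 * (c + P0) <= s * W * ln z * (c + P0) by apply: ler_wpM2r => //; apply: ltW.
  have c2 : s * W * ln z * (c + P0) < s * W * ((c + p) * ln z0).
    have -> : s * W * ln z * (c + P0) = s * W * ((c + P0) * ln z) by ring.
    by rewrite ltr_pM2l //; apply: mulr_gt0.
  have e : P0 * s00 / c + s00 = D * ln 2 * (c + P0) / (W * ln z0 * c).
    by rewrite /s00; field; rewrite !gt_eqF.
  have e2 : s * ((c + p) * ln z0) / (ln z0 * c) = p * s / c + s.
    by field; rewrite !gt_eqF.
  have : D * ln 2 * (c + P0) / (W * ln z0 * c) < p * s / c + s.
    rewrite -e2 ltr_pdivrMr; last by apply: mulr_gt0.
    have -> : s * ((c + p) * ln z0) / (ln z0 * c) * (W * ln z0 * c) = s * W * ((c + p) * ln z0).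
      by field; rewrite !gt_eqF.
    exact: le_lt_trans c1 c2.
  rewrite e; lra.
Qed.

Lemma hat_spec (R : realType) (W N0 PA Pmax D zeta h g : R) :
  0 < W -> 0 < N0 -> 0 < PA -> 0 < Pmax -> 0 < D -> 0 < zeta -> 0 < h -> 0 < g ->
  exists P0, [/\ 0 < P0, P0 <= Pmax,
    tau0_hat W N0 PA Pmax D zeta h g =
      P0 * (D / (W * log2 (1 + P0 * g / (W * N0)))) / (zeta * PA * h) &
    (1 + P0 * g / (W * N0)) * ln (1 + P0 * g / (W * N0)) - (1 + P0 * g / (W * N0))
      <= g * (zeta * PA * h) / (W * N0) - 1].
Proof.
move=> W0 N00 PA0 Pm0 D0 z0 h0 g0.
have gam : gamma_i W N0 PA zeta h g = g * (zeta * PA * h) / (W * N0).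
  by rewrite /gamma_i; ring.
rewrite /tau0_hat /tau0_dot /tauS_dot /alpha_i gam.
set K := W * N0.
set c := zeta * PA * h.
have K0 : 0 < K by apply: mulr_gt0.
have c0 : 0 < c by rewrite /c; do 2 apply: mulr_gt0 => //.
set γ := g * c / K.
have γ0 : 0 < γ by apply: divr_gt0 => //; apply: mulr_gt0.
have e0 : 0 < expR 1 :> R by apply: expR_gt0.
have hx : - expR (-1) < (γ - 1) / expR 1.
  rewrite expRN mulrBl mul1r.
  have : 0 < γ / expR 1 by apply: divr_gt0.
  lra.
have [w1 w2] := lambert_spec hx.
set w := lambertW0 ((γ - 1) / expR 1) in w1 w2 *.
set α := w + 1.
have α0 : 0 < α by rewrite /α; lra.
set y := expR α.
have y1 : 1 < y by have := expR_gt1Dx (lt0r_neq0 α0); rewrite -/y; lra.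
have hy : y * ln y - y = γ - 1.
  rewrite /y expRK /α expRD.
  have -> : expR w * expR 1 * (w + 1) - expR w * expR 1 = expR 1 * (w * expR w) by ring.
  by rewrite w2 mulrC divfK ?gt_eqF.
have l2 : 0 < ln (2 : R) by apply: ln_gt0; lra.
have pw : 2 `^ (α / ln 2) = y.
  by rewrite /powR gt_eqF ?ltr0n // divfK ?gt_eqF.
rewrite pw.
have cond : c * (D * ln 2 / (W * α * γ) * (y - 1)) / (D * ln 2 / (W * α)) = (y - 1) * K / g.
  rewrite /γ; field; rewrite ?gt_eqF //; try (do ! apply: mulr_gt0) => //.
rewrite cond.
have yK : 1 + (y - 1) * K / g * g / K = y by field; rewrite !gt_eqF.
have Pd0 : 0 < (y - 1) * K / g by apply: divr_gt0 => //; apply: mulr_gt0 => //; lra.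
case: ifP => hc.
- exists ((y - 1) * K / g); split => //.
    rewrite yK /log2 /y expRK.
    have E : forall (a : R), a = expR α - 1 -> D * ln 2 / (W * α * γ) * a =
      a * K / g * (D / (W * (α / ln 2))) / c.
      by move=> a _; rewrite /γ; field; rewrite !gt_eqF.
    exact: E.
  by rewrite yK hy.
- exists Pmax; split => //.
  rewrite /tau0_ddot /tauS_ddot -/K -/c //.
  rewrite -hy; apply: zlnz_mono.
    have : 0 < Pmax * g / K by apply: divr_gt0 => //; apply: mulr_gt0.
    lra.
  move/negbT: hc; rewrite -ltNge => hc.
  rewrite -yK lerD2l ler_pM2r ?invr_gt0 // ler_pM2r //.
  exact: ltW.
Qed.

Unset Implicit Arguments. Set Strict Implicit.

Theorem lemma4 (R : realType) (N : nat) (W N0 PA Pmax : R)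
  (D zeta h g : 'I_N -> R)
  (hN : (1 <= N)%N) (hW : 0 < W) (hN0 : 0 < N0) (hPA : 0 < PA) (hPmax : 0 < Pmax)
  (hD : forall i, 0 < D i) (hzeta : forall i, 0 < zeta i)
  (hh : forall i, 0 < h i) (hg : forall i, 0 < g i)
  (tau0 : R) (tauS PS : 'I_N -> R) :
  optimal W N0 PA Pmax D zeta h g tau0 tauS PS ->
  \big[Num.max/0]_(i < N) tau0_hat W N0 PA Pmax (D i) (zeta i) (h i) (g i) <= tau0.
Proof.
move=> [[t0 hf] hopt].
apply: (big_ind (fun x => x <= tau0)) => //.
  by move=> x y hx hy; rewrite ge_max hx hy.
move=> i _.
have [P0 [P0p P0m hhat ha]] := hat_spec hW hN0 hPA hPmax (hD i) (hzeta i) (hh i) (hg i).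
rewrite hhat.
have K0 : 0 < W * N0 by apply: mulr_gt0.
have c0 : 0 < zeta i * PA * h i by apply: mulr_gt0 => //; apply: mulr_gt0.
set z0 := 1 + P0 * g i / (W * N0) in ha hhat *.
set sh := D i / (W * log2 z0) in hhat *.
rewrite leNgt; apply/negP => hlt.
have [hs [hp [hps [hDi hPm]]]] := hf i.
have hb := single c0 K0 (hg i) (hD i) hW P0p ha t0 hs hp hps hDi hlt.
have l2 : 0 < ln (2 : R) by apply: ln_gt0; lra.
have z01 : 1 < z0.
  have : 0 < P0 * g i / (W * N0) by apply: divr_gt0 => //; apply: mulr_gt0.
  rewrite /z0; lra.
have lz : 0 < log2 z0 by apply: divr_gt0 => //; apply: ln_gt0.
have sh0 : 0 < sh by apply: divr_gt0 => //; apply: mulr_gt0.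
set hat := P0 * sh / (zeta i * PA * h i) in hlt hb *.
have hat0 : tau0 <= hat by apply: ltW.
have feas : feasible W N0 PA Pmax D zeta h g hat
   (fun j => if j == i then sh else tauS j) (fun j => if j == i then P0 else PS j).
  split; first by apply: le_trans hat0.
  move=> j; case: (eqVneq j i) => [->|ne].
    split; first exact: ltW.
    split; first exact: ltW.
    split.
      by rewrite /hat [X in _ <= X]mulrC divfK ?gt_eqF //.
    split => //.
    by rewrite /sh -/z0 -mulrA divfK // gt_eqF // mulr_gt0.
  have [hs' [hp' [hps' [hDi' hPm']]]] := hf j.
  do 3 (split => //).
  apply: (le_trans hps'); apply: ler_wpM2l => //.
  apply: mulr_ge0; [apply: mulr_ge0|]; apply: ltW => //.
have := hopt _ _ _ feas.
rewrite /objective (bigD1 i) //= [in X in _ <= X](bigD1 i) //= eqxx.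
have -> : \sum_(j < N | j != i) (if j == i then sh else tauS j) = \sum_(j < N | j != i) tauS j.
  by apply: eq_bigr => j /negbTE ->.
move: hb; rewrite -/z0 -/sh => hb.
lra.
Qed.
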